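(* Let $(X,\Sigma)$ be a measurable space and $p$ a transition function on it with associated operator $A$. Suppose $A$ has a disjoint countably additive cycle of measures $K=\{\mu_1,\dots,\mu_m\}\subset S_{ca}$. Then there is a system of pairwise disjoint sets $S=\{D_1,\dots,D_m\}$, $D_i\in\Sigma$, such that $\mu_i(D_j)=1$ if $i=j$ and $\mu_i(D_j)=0$ if $i\ne j$, and $p(x,D_{i+1})=1$ for $\mu_i$-almost every $x\in D_i$, $i=1,\dots,m-1$, and $p(x,D_1)=1$ for $\mu_m$-almost every $x\in D_m$ (so $S$ is a singular cycle of sets of states in the $\mu_i$-almost everywhere sense).
   Context: $X$ is an arbitrary infinite set and $\Sigma$ a $\sigma$-algebra of subsets of $X$ containing all one-point sets. $ca(X,\Sigma)$ denotes the bounded countably additive real measures on $\Sigma$ and $S_{ca}=\{\mu\in ca(X,\Sigma):\mu\ge0,\ \mu(X)=1\}$. A transition function is a map $p(x,E)$ with $0\le p(x,E)\le1$, $p(x,X)=1$, $p(\cdot,E)$ bounded $\Sigma$-measurable for every $E\in\Sigma$, and $p(x,\cdot)$ countably additive for every $x\in X$. The Markov operator is $A\mu(E)=\int_X p(x,E)\,\mu(dx)$. A cycle of measures of $A$ is a finite numbered set $\{\mu_1,\dots,\mu_m\}$ of pairwise different positive measures with $A\mu_i=\mu_{i+1}$ ($1\le i\le m-1$), $A\mu_m=\mu_1$. For positive measures, $(\mu\wedge\nu)(E)=\inf\{\mu(C)+\nu(E\setminus C):C\subset E,C\in\Sigma\}$, and $\mu,\nu$ are disjoint if $\mu\wedge\nu=0$;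 a cycle is disjoint if its measures are pairwise disjoint. *)

(* Defs.v *)
From HB Require Import structures.
From mathcomp Require Import all_boot all_order all_algebra.
From mathcomp Require Import all_classical all_reals all_analysis.
Set Implicit Arguments. Unset Strict Implicit. Unset Printing Implicit Defensive.
Import Order.TTheory GRing.Theory Num.Theory.
Local Open Scope classical_set_scope.
Local Open Scope ring_scope.

Definition transition_function (d : measure_display) (T : measurableType d)
  (R : realType) (p : T -> set T -> R) : Prop :=
  [/\ (forall x E, measurable E -> 0 <= p x E <= 1),
      (forall x, p x setT = 1),
      (forall E, measurable E -> measurable_fun setT (fun x => p x E)) &
      (forall x, semi_sigma_additive (fun E => (p x E)%:E))].

Definition markov_op (d : measure_display) (T : measurableType d)
  (R : realType) (p : T -> set T -> R) (mu : {measure set T -> \bar R})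
  (E : set T) : \bar R :=
  (\int[mu]_x (p x E)%:E)%E.

Definition measure_meet (d : measure_display) (T : measurableType d)
  (R : realType) (mu nu : set T -> \bar R) (E : set T) : \bar R :=
  ereal_inf [set (mu C + nu (E `\` C))%E | C in [set C | measurable C /\ C `<=` E]].

Definition measures_disjoint (d : measure_display) (T : measurableType d)
  (R : realType) (mu nu : set T -> \bar R) : Prop :=
  forall E, measurable E -> measure_meet mu nu E = 0%E.

(* A disjoint cycle of measures mu_0,...,mu_{m-1} of A (indices mod m). *)
Definition disjoint_cycle (d : measure_display) (T : measurableType d)
  (R : realType) (p : T -> set T -> R) (m : nat)
  (mu : 'I_m -> probability T R) : Prop :=
  [/\ (forall i j : 'I_m, i != j -> (mu i : set T -> \bar R) <> mu j),
      (forall i : 'I_m, forall E, measurable E -> markov_op p (mu i) E = mu (ordS i) E) &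
      (forall i j : 'I_m, i != j -> measures_disjoint (mu i) (mu j))].

(* Main.v *)
Require Import Defs.
From HB Require Import structures.
From mathcomp Require Import all_boot all_order all_algebra.
From mathcomp Require Import all_classical all_reals all_analysis.
From mathcomp Require Import lra measurable_realfun.
Import Order.TTheory GRing.Theory Num.Theory.
Local Open Scope classical_set_scope.
Local Open Scope ring_scope.
Lemma sep_lemma (d : measure_display) (T : measurableType d) (R : realType)
  (mu nu : probability T R) : measures_disjoint mu nu ->
  exists S, [/\ measurable S, mu (~` S) = 0%E & nu S = 0%E].
Proof.
move=> dj.
pose c := cadd (charge_of_finite_measure mu) (copp (charge_of_finite_measure nu)).
have [P [N [[mP posP] [mN negN] PN PN0]]] := Hahn_decomposition c.
have NE : ~` P = N.
  apply/seteqP; split => x.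
    move=> nPx; have : (P `|` N) x by rewrite PN.
    by case.
  by move=> Nx Px; have : (P `&` N) x by []; rewrite PN0.
have fE (q : probability T R) A : measurable A -> q A = (fine (q A))%:E.
  by move=> mA; rewrite fineK// fin_num_measure.
have split (q : probability T R) A B : measurable A -> measurable B ->
    q A = (q (A `&` B) + q (A `&` ~` B))%E.
  move=> mA mB; rewrite -measureU; [|exact: measurableI|apply: measurableI => //; exact: measurableC|].
    by rewrite -setIUr setUv setIT.
  by rewrite setIACA setICr setI0.
have key : (mu N + nu P <= 0)%E.
  have := dj setT measurableT; rewrite /measure_meet => <-.
  apply: le_ereal_inf_tmp => _ [C [mC _] <-].
  rewrite setTD.
  have mCc : measurable (~` C) by exact: measurableC.
  have h1 : (0 <= mu (C `&` P) - nu (C `&` P))%E.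
    exact: (posP _ (measurableI _ _ mC mP) (@subIsetr _ _ _)).
  have h2 : (mu (~` C `&` N) - nu (~` C `&` N) <= 0)%E.
    exact: (negN _ (measurableI _ _ mCc mN) (@subIsetr _ _ _)).
  rewrite (split mu N C mN mC) (split nu P C mP mC) (split mu C P mC mP) (split nu (~` C) P mCc mP).
  rewrite -NE.
  rewrite -NE in h2.
  have mCP := measurableI _ _ mC mP.
  have mCN : measurable (C `&` ~` P) by apply: measurableI => //; exact: measurableC.
  have mCcP := measurableI _ _ mCc mP.
  have mCcN : measurable (~` C `&` ~` P) by apply: measurableI => //; exact: measurableC.
  have mPC : measurable (P `&` C) by rewrite setIC.
  have mPCc : measurable (P `&` ~` C) by rewrite setIC.
  have mNC : measurable (~` P `&` C) by rewrite setIC.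
  have mNCc : measurable (~` P `&` ~` C) by rewrite setIC.
  rewrite (setIC (~` P) C) (setIC (~` P) (~` C)) (setIC P C) (setIC P (~` C)).
  move: h1 h2.
  rewrite (fE mu _ mCP) (fE nu _ mCP) (fE mu _ mCN).
  rewrite (fE nu _ mCcP) (fE mu _ mCcN) (fE nu _ mCcN).
  rewrite -!EFinD -?EFinB !lee_fin.
  idtac.
  lra.
have mu0 : mu N = 0%E.
  apply/eqP; rewrite eq_le measure_ge0 andbT.
  by apply: le_trans key; rewrite leeDl.
have nu0 : nu P = 0%E.
  apply/eqP; rewrite eq_le measure_ge0 andbT.
  by apply: le_trans key; rewrite leeDr.
by exists P; rewrite NE.
Qed.

Lemma ae_one (d : measure_display) (T : measurableType d) (R : realType)
  (p : T -> set T -> R) (hp : transition_function p) (mu nu : probability T R)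
  (F : set T) (mF : measurable F) :
  markov_op p mu F = nu F -> nu F = 1%E ->
  {ae mu, forall x, p x F = 1}.
Proof.
case: hp => hp01 _ hpm _ hA h1.
have mf : measurable_fun setT (fun x => p x F) := hpm F mF.
have f0 x : (0 <= 1 - p x F)%R by have /andP[_ ?] := hp01 x F mF; rewrite subr_ge0.
have p0 x : (0 <= p x F)%R by have /andP[? _] := hp01 x F mF.
have mg : measurable_fun setT (EFin \o (fun x => 1 - p x F)).
  apply/measurable_EFinP; apply: measurable_funB => //; exact: measurable_cst.
have mpe : measurable_fun setT (EFin \o (fun x => p x F)) by apply/measurable_EFinP.
have hI : (\int[mu]_x ((p x F)%:E + (1 - p x F)%:E) = 1)%E.
  under eq_integral do rewrite -EFinD subrKC.
  by rewrite integral_cst // mul1e; exact: probability_setT.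
rewrite ge0_integralD // in hI; last 2 first.
  by move=> x _; rewrite lee_fin.
  by move=> x _; rewrite lee_fin.
move: hI; rewrite -/(markov_op p mu F) hA h1 => hI.
have i0 : (\int[mu]_x (1 - p x F)%:E = 0)%E.
  have ge0 : (0 <= \int[mu]_x (1 - p x F)%:E)%E.
    by apply: integral_ge0 => x _; rewrite lee_fin.
  move: hI ge0; case: (\int[mu]_x (1 - p x F)%:E)%E => [r| |] //.
  by move=> /eqP; rewrite -EFinD eqe => /eqP hr _; congr EFin; lra.
have : (\int[mu]_x `|(1 - p x F)%:E| = 0)%E.
  by under eq_integral do rewrite gee0_abs ?lee_fin//.
move/(ae_eq_integral_abs _ measurableT mg).
apply: filterS => x /(_ I) /= /eqP; rewrite eqe subr_eq0 => /eqP <-.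
by [].
Qed.

Theorem theorem4p6 (d : measure_display) (T : measurableType d) (R : realType)
  (hinf : infinite_set [set: T]) (hsing : forall x : T, measurable [set x])
  (p : T -> set T -> R) (hp : transition_function p)
  (m : nat) (mu : 'I_m -> probability T R) (hcyc : disjoint_cycle p mu) :
  exists D : 'I_m -> set T,
    [/\ (forall i, measurable (D i)),
        (forall i j, i != j -> D i `&` D j = set0),
        (forall i j, mu i (D j) = (if i == j then 1 else 0)%E) &
        (forall i, {ae mu i, forall x, D i x -> p x (D (ordS i)) = 1})].
Proof.
case: hcyc => _ hA hdj.
have hT (i j : 'I_m) : exists S, (i < j)%N ->
    [/\ measurable S, mu i (~` S) = 0%E & mu j S = 0%E].
  case: (ltnP i j) => ij; last by exists set0.
  have [S HS] := (@sep_lemma _ _ _ (mu i) (mu j)) (hdj i j (negbT (ltn_eqF ij))).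
  by exists S.
pose Tf (i j : 'I_m) := sval (cid (hT i j)).
have HT (i j : 'I_m) : (i < j)%N -> [/\ measurable (Tf i j), mu i (~` Tf i j) = 0%E & mu j (Tf i j) = 0%E].
  exact: (svalP (cid (hT i j))).
pose S (i j : 'I_m) := if (i < j)%N then Tf i j else ~` Tf j i.
have HS i j : i != j -> [/\ measurable (S i j), mu i (~` S i j) = 0%E & mu j (S i j) = 0%E].
  move=> ij; rewrite /S; case: ltnP => h.
    exact: HT.
  have ji : (j < i)%N by rewrite ltn_neqAle h andbT eq_sym.
  have [? ? ?] := HT j i ji.
  by rewrite setCK; split => //; exact: measurableC.
have Scompl i j : i != j -> S j i = ~` S i j.
  move=> ij; rewrite /S; case: ltngtP => h.
  - by rewrite setCK.
  - by [].
  - by move/val_inj: h => h; rewrite h eqxx in ij.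
pose E (i : 'I_m) := ~` \big[setU/set0]_(j < m | j != i) ~` S i j.
have mE i : measurable (E i).
  apply: measurableC; apply: bigsetU_measurable => j ji.
  by rewrite eq_sym in ji; have [? _ _] := HS i j ji; exact: measurableC.
have ES i j : i != j -> E i `<=` S i j.
  move=> ij x Ex; apply: contrapT => nS; apply: Ex.
  rewrite (bigD1 j) /=; last by rewrite eq_sym.
  by left.
have disj i j : i != j -> E i `&` E j = set0.
  move=> ij; apply/seteqP; split => // x [/(ES _ _ ij) h1].
  by rewrite eq_sym in ij; move/(ES _ _ ij); rewrite Scompl 1?eq_sym.
have muE i j : mu i (E j) = (if i == j then 1 else 0)%E.
  case: eqVneq => [<-|ij].
    rewrite probability_setC; last first.
      apply: bigsetU_measurable => k ki.
      by rewrite eq_sym in ki; have [? _ _] := HS i k ki; exact: measurableC.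
    suff -> : mu i (\big[setU/set0]_(k < m | k != i) ~` S i k) = 0%E by rewrite sube0.
    apply: (measure_negligible _).
      apply: bigsetU_measurable => k ki.
      by rewrite eq_sym in ki; have [? _ _] := HS i k ki; exact: measurableC.
    elim/big_ind: _ => //; first exact: negligible_set0.
      by move=> A B; exact: negligibleU.
    move=> k ki; rewrite eq_sym in ki; have [mS h _] := HS i k ki.
    by apply/negligibleP => //; exact: measurableC.
  rewrite eq_sym in ij.
  have [mS _ h] := HS j i ij.
  apply/eqP; rewrite eq_le measure_ge0 andbT -h.
  by apply: le_measure => //; [rewrite inE|rewrite inE|exact: ES].
exists E; split => // i.
have h1 : mu (ordS i) (E (ordS i)) = 1%E by rewrite muE eqxx.
have := @ae_one _ _ _ p hp (mu i) (mu (ordS i)) (E (ordS i)) (mE _) (hA i _ (mE _)) h1.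
by apply: filterS => x ->.
Qed.
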